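(* Over $\mathsf{RCA_0}$ the following are equivalent: (1) $\mathsf{I}\Sigma^0_2$; (2) $\mathrm{SPP}$.
   Context: $\mathsf{RCA_0}$ is the base system of second order arithmetic; $\mathsf{I}\Sigma^0_2$ is induction for $\Sigma^0_2$-formulas. A natural number $k$ is identified with $\{0,\dots,k-1\}$. $\mathrm{SPP}_k$ (strong pigeonhole principle): for every $c:\mathbb N\to k$ there exists a set $I\subseteq k$ such that for all $i$, $i\in I$ iff $i<k$ and $c(x)=i$ for infinitely many $x$. $\mathrm{SPP}$ is $\forall k\,\mathrm{SPP}_k$. *)

(* Defs.v *)
(** L2-structures: first-order part [carrier] with 0,1,+,*,<, and a
    second-order part [sets] (a collection of subsets of the first-order part).
    Equality is interpreted as Coq equality. *)
Record L2str : Type := {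
  carrier : Type;
  zero : carrier;
  one : carrier;
  add : carrier -> carrier -> carrier;
  mul : carrier -> carrier -> carrier;
  lt : carrier -> carrier -> Prop;
  sets : (carrier -> Prop) -> Prop
}.

(** Syntax of L2, de Bruijn indices (number variables and set variables
    are counted separately). *)
Inductive term : Type :=
| tvar : nat -> term
| tzero : term
| tone : term
| tadd : term -> term -> term
| tmul : term -> term -> term.

Inductive form : Type :=
| fEq : term -> term -> form
| fLt : term -> term -> form
| fMem : term -> nat -> form
| fNeg : form -> form
| fAnd : form -> form -> form
| fOr : form -> form -> form
| fImp : form -> form -> form
| fAll : form -> form
| fEx : form -> form
| fBAll : term -> form -> form            (* forall n < t (t in outer context) *)
| fBEx : term -> form -> form
| fSAll : form -> form
| fSEx : form -> form.

Definition scons {A : Type} (a : A) (r : nat -> A) : nat -> A :=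
  fun n => match n with 0 => a | S k => r k end.

Fixpoint eval (M : L2str) (rho : nat -> carrier M) (t : term) : carrier M :=
  match t with
  | tvar n => rho n
  | tzero => zero M
  | tone => one M
  | tadd a b => add M (eval M rho a) (eval M rho b)
  | tmul a b => mul M (eval M rho a) (eval M rho b)
  end.

Fixpoint sat (M : L2str) (rho : nat -> carrier M)
    (sigma : nat -> carrier M -> Prop) (phi : form) : Prop :=
  match phi with
  | fEq a b => eval M rho a = eval M rho b
  | fLt a b => lt M (eval M rho a) (eval M rho b)
  | fMem a i => sigma i (eval M rho a)
  | fNeg p => ~ sat M rho sigma p
  | fAnd p q => sat M rho sigma p /\ sat M rho sigma q
  | fOr p q => sat M rho sigma p \/ sat M rho sigma q
  | fImp p q => sat M rho sigma p -> sat M rho sigma q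
  | fAll p => forall a, sat M (scons a rho) sigma p
  | fEx p => exists a, sat M (scons a rho) sigma p
  | fBAll t p => forall a, lt M a (eval M rho t) -> sat M (scons a rho) sigma p
  | fBEx t p => exists a, lt M a (eval M rho t) /\ sat M (scons a rho) sigma p
  | fSAll p => forall X, sets M X -> sat M rho (scons X sigma) p
  | fSEx p => exists X, sets M X /\ sat M rho (scons X sigma) p
  end.

Fixpoint isSigma00 (phi : form) : Prop :=
  match phi with
  | fEq _ _ | fLt _ _ | fMem _ _ => True
  | fNeg p => isSigma00 p
  | fAnd p q | fOr p q | fImp p q => isSigma00 p /\ isSigma00 q
  | fBAll _ p | fBEx _ p => isSigma00 p
  | _ => False
  end.

Fixpoint isSigma0 (k : nat) (phi : form) : Prop :=
  match k with
  | 0 => isSigma00 phi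
  | S j => match phi with fEx p => isPi0 j p | _ => False end
  end
with isPi0 (k : nat) (phi : form) : Prop :=
  match k with
  | 0 => isSigma00 phi
  | S j => match phi with fAll p => isSigma0 j p | _ => False end
  end.

Definition set_env (M : L2str) (sigma : nat -> carrier M -> Prop) : Prop :=
  forall i, sets M (sigma i).

(** Induction scheme for a class of formulas; the induction variable is
    number variable 0, all other free variables are parameters. *)
Definition Induction (P : form -> Prop) (M : L2str) : Prop :=
  forall phi, P phi ->
  forall (rho : nat -> carrier M) (sigma : nat -> carrier M -> Prop),
    set_env M sigma ->
    sat M (scons (zero M) rho) sigma phi ->
    (forall a, sat M (scons a rho) sigma phi ->
               sat M (scons (add M a (one M)) rho) sigma phi) ->
    forall a, sat M (scons a rho) sigma phi.

Definition BasicAxioms (M : L2str) : Prop :=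
  (forall n, add M n (one M) <> zero M) /\
  (forall m n, add M m (one M) = add M n (one M) -> m = n) /\
  (forall m, add M m (zero M) = m) /\
  (forall m n, add M m (add M n (one M)) = add M (add M m n) (one M)) /\
  (forall m, mul M m (zero M) = zero M) /\
  (forall m n, mul M m (add M n (one M)) = add M (mul M m n) m) /\
  (forall m, ~ lt M m (zero M)) /\
  (forall m n, lt M m (add M n (one M)) <-> (lt M m n \/ m = n)).

Definition Delta01_CA (M : L2str) : Prop :=
  forall phi psi, isSigma0 1 phi -> isPi0 1 psi ->
  forall (rho : nat -> carrier M) (sigma : nat -> carrier M -> Prop),
    set_env M sigma ->
    (forall a, sat M (scons a rho) sigma phi <-> sat M (scons a rho) sigma psi) ->
    exists X, sets M X /\ forall a, X a <-> sat M (scons a rho) sigma phi.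

Definition RCA0 (M : L2str) : Prop :=
  BasicAxioms M /\ Induction (isSigma0 1) M /\ Delta01_CA M.

Definition ISigma02 (M : L2str) : Prop := Induction (isSigma0 2) M.

Definition pair (M : L2str) (i j : carrier M) : carrier M :=
  add M (mul M (add M i j) (add M i j)) i.

(** C codes a function c : N -> k (Simpson II.3: C is a subset of N x k,
    total and single-valued). *)
Definition IsFunTo (M : L2str) (k : carrier M) (C : carrier M -> Prop) : Prop :=
  (forall n, C n -> exists x y, n = pair M x y /\ lt M y k) /\
  (forall x, exists y, C (pair M x y)) /\
  (forall x y y', C (pair M x y) -> C (pair M x y') -> y = y').

Definition SPPk (M : L2str) (k : carrier M) : Prop :=
  forall C, sets M C -> IsFunTo M k C ->
  exists I, sets M I /\
    forall i, I i <-> (lt M i k /\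
                       forall m, exists x, lt M m x /\ C (pair M x i)).

Definition SPP (M : L2str) : Prop := forall k, SPPk M k.

(* Main.v *)
Require Import Defs.
From Stdlib Require Import Setoid Morphisms Ring Classical.


Fixpoint ren_term (f : nat -> nat) (t : term) : term :=
  match t with
  | tvar n => tvar (f n)
  | tzero => tzero
  | tone => tone
  | tadd a b => tadd (ren_term f a) (ren_term f b)
  | tmul a b => tmul (ren_term f a) (ren_term f b)
  end.

Definition up (f : nat -> nat) : nat -> nat :=
  fun n => match n with 0 => 0 | S k => S (f k) end.

Fixpoint ren_form (f : nat -> nat) (phi : form) : form :=
  match phi with
  | fEq a b => fEq (ren_term f a) (ren_term f b)
  | fLt a b => fLt (ren_term f a) (ren_term f b)
  | fMem a i => fMem (ren_term f a) i
  | fNeg p => fNeg (ren_form f p)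
  | fAnd p q => fAnd (ren_form f p) (ren_form f q)
  | fOr p q => fOr (ren_form f p) (ren_form f q)
  | fImp p q => fImp (ren_form f p) (ren_form f q)
  | fAll p => fAll (ren_form (up f) p)
  | fEx p => fEx (ren_form (up f) p)
  | fBAll t p => fBAll (ren_term f t) (ren_form (up f) p)
  | fBEx t p => fBEx (ren_term f t) (ren_form (up f) p)
  | fSAll p => fSAll (ren_form f p)
  | fSEx p => fSEx (ren_form f p)
  end.

Lemma eval_ren M rho f t : eval M rho (ren_term f t) = eval M (fun n => rho (f n)) t.
Proof. induction t; simpl; congruence. Qed.

Lemma eval_ext M rho rho' t : (forall n, rho n = rho' n) -> eval M rho t = eval M rho' t.
Proof. intros H; induction t; simpl; congruence. Qed.

Lemma sat_ext M phi : forall rho rho' sigma, (forall n, rho n = rho' n) ->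
  (sat M rho sigma phi <-> sat M rho' sigma phi).
Proof.
  induction phi; intros rho rho' sigma H; simpl;
  repeat match goal with |- context [eval M rho ?t] => rewrite (eval_ext M rho rho' t H) end;
  try tauto.
  - rewrite (IHphi _ _ sigma H); tauto.
  - rewrite (IHphi1 _ _ sigma H), (IHphi2 _ _ sigma H); tauto.
  - rewrite (IHphi1 _ _ sigma H), (IHphi2 _ _ sigma H); tauto.
  - rewrite (IHphi1 _ _ sigma H), (IHphi2 _ _ sigma H); tauto.
  - assert (E : forall a, (forall n, scons a rho n = scons a rho' n)) by (intros a [|n]; simpl; auto).
    split; intros G a; [apply (IHphi _ _ sigma (E a)) | apply (IHphi _ _ sigma (E a))]; auto.
  - assert (E : forall a, (forall n, scons a rho n = scons a rho' n)) by (intros a [|n]; simpl; auto).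
    split; intros [a G]; exists a; [apply (IHphi _ _ sigma (E a)) | apply (IHphi _ _ sigma (E a))]; auto.
  - assert (E : forall a, (forall n, scons a rho n = scons a rho' n)) by (intros a [|n]; simpl; auto).
    split; intros G a Ha; [apply (IHphi _ _ sigma (E a)) | apply (IHphi _ _ sigma (E a))]; auto.
  - assert (E : forall a, (forall n, scons a rho n = scons a rho' n)) by (intros a [|n]; simpl; auto).
    split; intros [a [Ha G]]; exists a; split; auto; [apply (IHphi _ _ sigma (E a)) | apply (IHphi _ _ sigma (E a))]; auto.
  - split; intros G X HX; apply (IHphi _ _ _ H); auto.
  - split; intros [X [HX G]]; exists X; split; auto; apply (IHphi _ _ _ H); auto.
Qed.

Lemma sat_ren M phi : forall f rho sigma,
  sat M rho sigma (ren_form f phi) <-> sat M (fun n => rho (f n)) sigma phi.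
Proof.
  induction phi; intros f rho sigma; simpl; rewrite ?eval_ren; try tauto.
  - rewrite IHphi; tauto.
  - rewrite IHphi1, IHphi2; tauto.
  - rewrite IHphi1, IHphi2; tauto.
  - rewrite IHphi1, IHphi2; tauto.
  - assert (E : forall a, (forall n, scons a rho (up f n) = scons a (fun n => rho (f n)) n)) by (intros a [|n]; simpl; auto).
    split; intros G a; specialize (G a); rewrite IHphi in *; rewrite sat_ext in *; eauto; intros; rewrite E; auto.
  - assert (E : forall a, (forall n, scons a rho (up f n) = scons a (fun n => rho (f n)) n)) by (intros a [|n]; simpl; auto).
    split; intros [a G]; exists a; rewrite IHphi in *; rewrite sat_ext in *; eauto; intros; rewrite E; auto.
  - assert (E : forall a, (forall n, scons a rho (up f n) = scons a (fun n => rho (f n)) n)) by (intros a [|n]; simpl; auto).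
    split; intros G a Ha; specialize (G a Ha); rewrite IHphi in *; rewrite sat_ext in *; eauto; intros; rewrite E; auto.
  - assert (E : forall a, (forall n, scons a rho (up f n) = scons a (fun n => rho (f n)) n)) by (intros a [|n]; simpl; auto).
    split; intros [a [Ha G]]; exists a; split; auto; rewrite IHphi in *; rewrite sat_ext in *; eauto; intros; rewrite E; auto.
  - split; intros G X HX; specialize (G X HX); rewrite IHphi in *; auto.
  - split; intros [X [HX G]]; exists X; split; auto; rewrite IHphi in *; auto.
Qed.

Lemma isSigma00_ren phi f : isSigma00 phi -> isSigma00 (ren_form f phi).
Proof. revert f; induction phi; simpl; intros; try tauto; firstorder. Qed.


Lemma sat_lift M phi a r sigma : sat M (scons a r) sigma (ren_form S phi) <-> sat M r sigma phi.
Proof. rewrite sat_ren; apply sat_ext; reflexivity. Qed.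

Section Arith.
Variable M : L2str.
Hypothesis HM : RCA0 M.
Variable sig : nat -> carrier M -> Prop.
Hypothesis Hsig : set_env M sig.

Notation N := (carrier M).
Notation "a ⊕ b" := (add M a b) (at level 50, left associativity).
Notation "a ⊗ b" := (mul M a b) (at level 40, left associativity).
Notation "a ≺ b" := (lt M a b) (at level 70).
Notation "𝟘" := (zero M).
Notation "𝟙" := (one M).

Lemma A1 : forall n, n ⊕ 𝟙 <> 𝟘. Proof. apply HM. Qed.
Lemma A2 : forall m n, m ⊕ 𝟙 = n ⊕ 𝟙 -> m = n. Proof. apply HM. Qed.
Lemma A3 : forall m, m ⊕ 𝟘 = m. Proof. apply HM. Qed.
Lemma A4 : forall m n, m ⊕ (n ⊕ 𝟙) = (m ⊕ n) ⊕ 𝟙. Proof. apply HM. Qed.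
Lemma A5 : forall m, m ⊗ 𝟘 = 𝟘. Proof. apply HM. Qed.
Lemma A6 : forall m n, m ⊗ (n ⊕ 𝟙) = m ⊗ n ⊕ m. Proof. apply HM. Qed.
Lemma A7 : forall m, ~ m ≺ 𝟘. Proof. apply HM. Qed.
Lemma A8 : forall m n, m ≺ n ⊕ 𝟙 <-> m ≺ n \/ m = n. Proof. apply HM. Qed.

Lemma ind1 (phi : form) : isSigma00 phi -> forall rho sigma, set_env M sigma ->
  sat M (scons 𝟘 rho) sigma (fEx phi) ->
  (forall a, sat M (scons a rho) sigma (fEx phi) -> sat M (scons (a ⊕ 𝟙) rho) sigma (fEx phi)) ->
  forall a, sat M (scons a rho) sigma (fEx phi).
Proof. intros H rho sigma Hs. destruct HM as [_ [Hind _]]. apply Hind; auto. Qed.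

Lemma ind0g (phi : form) : isSigma00 phi -> forall rho sigma, set_env M sigma ->
  sat M (scons 𝟘 rho) sigma phi ->
  (forall a, sat M (scons a rho) sigma phi -> sat M (scons (a ⊕ 𝟙) rho) sigma phi) ->
  forall a, sat M (scons a rho) sigma phi.
Proof.
  intros H rho sigma Hs H0 HS a.
  assert (G := ind1 (ren_form S phi) (isSigma00_ren _ _ H) rho sigma Hs).
  simpl in G.
  destruct (G ltac:(exists 𝟘; rewrite sat_lift; auto)) with a as [z Hz].
  - intros b [z Hz]; exists z; rewrite sat_lift in *; auto.
  - rewrite sat_lift in Hz; auto.
Qed.

Definition rho0 : nat -> N := fun _ => 𝟘.

Ltac ind0 phi rho :=
  let H := fresh in
  pose proof (ind0g phi ltac:(simpl; tauto) rho sig Hsig) as H; simpl in H; apply H; clear H.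

Lemma add_0_l : forall n, 𝟘 ⊕ n = n.
Proof.
  ind0 (fEq (tadd tzero (tvar 0)) (tvar 0)) rho0.
  - apply A3.
  - intros a IH. rewrite A4, IH; auto.
Qed.

Lemma add_S_l : forall m n, (m ⊕ 𝟙) ⊕ n = (m ⊕ n) ⊕ 𝟙.
Proof.
  intros m.
  ind0 (fEq (tadd (tadd (tvar 1) tone) (tvar 0)) (tadd (tadd (tvar 1) (tvar 0)) tone)) (scons m rho0).
  - rewrite !A3; auto.
  - intros a IH. rewrite !A4, IH; auto.
Qed.

Lemma add_comm : forall m n, m ⊕ n = n ⊕ m.
Proof.
  intros m.
  ind0 (fEq (tadd (tvar 1) (tvar 0)) (tadd (tvar 0) (tvar 1))) (scons m rho0).
  - rewrite A3, add_0_l; auto.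
  - intros a IH. rewrite A4, IH, add_S_l; auto.
Qed.

Lemma add_assoc : forall a b c, a ⊕ b ⊕ c = a ⊕ (b ⊕ c).
Proof.
  intros a b.
  ind0 (fEq (tadd (tadd (tvar 2) (tvar 1)) (tvar 0)) (tadd (tvar 2) (tadd (tvar 1) (tvar 0)))) (scons b (scons a rho0)).
  - rewrite !A3; auto.
  - intros c IH. rewrite !A4, IH; auto.
Qed.

Lemma mul_0_l : forall n, 𝟘 ⊗ n = 𝟘.
Proof.
  ind0 (fEq (tmul tzero (tvar 0)) tzero) rho0.
  - apply A5.
  - intros a IH. rewrite A6, IH, A3; auto.
Qed.

Lemma mul_S_l : forall m n, (m ⊕ 𝟙) ⊗ n = m ⊗ n ⊕ n.
Proof.
  intros m.
  ind0 (fEq (tmul (tadd (tvar 1) tone) (tvar 0)) (tadd (tmul (tvar 1) (tvar 0)) (tvar 0))) (scons m rho0).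
  - rewrite !A5, A3; auto.
  - intros a IH. rewrite !A6, IH.
    rewrite !add_assoc. f_equal. rewrite <- !add_assoc. f_equal. apply add_comm.
Qed.

Lemma mul_comm : forall m n, m ⊗ n = n ⊗ m.
Proof.
  intros m.
  ind0 (fEq (tmul (tvar 1) (tvar 0)) (tmul (tvar 0) (tvar 1))) (scons m rho0).
  - rewrite A5, mul_0_l; auto.
  - intros a IH. rewrite A6, IH, mul_S_l; auto.
Qed.

Lemma distr_l : forall a b c, a ⊗ (b ⊕ c) = a ⊗ b ⊕ a ⊗ c.
Proof.
  intros a b.
  ind0 (fEq (tmul (tvar 2) (tadd (tvar 1) (tvar 0))) (tadd (tmul (tvar 2) (tvar 1)) (tmul (tvar 2) (tvar 0)))) (scons b (scons a rho0)).
  - rewrite A3, A5, A3; auto.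
  - intros c IH. rewrite A4, !A6, IH, add_assoc; auto.
Qed.

Lemma mul_assoc : forall a b c, a ⊗ b ⊗ c = a ⊗ (b ⊗ c).
Proof.
  intros a b.
  ind0 (fEq (tmul (tmul (tvar 2) (tvar 1)) (tvar 0)) (tmul (tvar 2) (tmul (tvar 1) (tvar 0)))) (scons b (scons a rho0)).
  - rewrite !A5; auto.
  - intros c IH. rewrite !A6, IH, distr_l; auto.
Qed.

Lemma mul_1_l : forall m, 𝟙 ⊗ m = m.
Proof.
  intros m. rewrite mul_comm. rewrite <- (add_0_l 𝟙). rewrite A6, A5, add_0_l; auto.
Qed.

Lemma SR : semi_ring_theory 𝟘 𝟙 (add M) (mul M) (@eq N).
Proof.
  constructor.
  - apply add_0_l.
  - apply add_comm.
  - intros; symmetry; apply add_assoc.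
  - apply mul_1_l.
  - apply mul_0_l.
  - apply mul_comm.
  - intros; symmetry; apply mul_assoc.
  - intros; rewrite mul_comm, distr_l, (mul_comm n p), (mul_comm m p); auto.
Qed.

Add Ring MR : SR.

Lemma add_cancel_l : forall a x y, a ⊕ x = a ⊕ y -> x = y.
Proof.
  intros a x y. revert a.
  ind0 (fImp (fEq (tadd (tvar 0) (tvar 1)) (tadd (tvar 0) (tvar 2))) (fEq (tvar 1) (tvar 2))) (scons x (scons y rho0)).
  - rewrite !add_0_l; auto.
  - intros a IH H. apply IH. apply A2. rewrite <- !add_S_l; auto.
Qed.

Lemma add_cancel_r : forall a x y, x ⊕ a = y ⊕ a -> x = y.
Proof. intros a x y H. apply (add_cancel_l a). rewrite (add_comm a x), (add_comm a y); auto. Qed.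

Lemma lt_of_ex : forall a d, a ≺ a ⊕ d ⊕ 𝟙.
Proof.
  intros a.
  ind0 (fLt (tvar 1) (tadd (tadd (tvar 1) (tvar 0)) tone)) (scons a rho0).
  - rewrite A3. apply A8; auto.
  - intros d IH. apply A8. left. replace (a ⊕ (d ⊕ 𝟙)) with (a ⊕ d ⊕ 𝟙) by ring. auto.
Qed.

Lemma ex_of_lt : forall a b, a ≺ b -> exists d, b = a ⊕ d ⊕ 𝟙.
Proof.
  intros a.
  pose proof (ind1 (fImp (fLt (tvar 2) (tvar 1)) (fEq (tvar 1) (tadd (tadd (tvar 2) (tvar 0)) tone)))
     ltac:(simpl; tauto) (scons a rho0) sig Hsig) as G. simpl in G.
  intros b Hb. destruct (G) with b as [d Hd].
  - exists 𝟘. intros H; exfalso; apply (A7 _ H).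
  - intros c [d Hd]. destruct (classic (a ≺ c)) as [H|H].
    + exists (d ⊕ 𝟙). intros _. rewrite (Hd H). ring.
    + exists 𝟘. intros H2. apply A8 in H2. destruct H2 as [H2|H2]; [tauto|]. subst. ring.
  - exists d; auto.
Qed.

Lemma lt_ex : forall a b, a ≺ b <-> exists d, b = a ⊕ d ⊕ 𝟙.
Proof. split; [apply ex_of_lt | intros [d ->]; apply lt_of_ex]. Qed.

Lemma lt_irrefl : forall a, ~ a ≺ a.
Proof.
  intros a H. apply lt_ex in H. destruct H as [d Hd].
  apply (A1 d). apply (add_cancel_l a). rewrite A3. symmetry. rewrite Hd at 1. ring.
Qed.

Lemma lt_trans : forall a b c, a ≺ b -> b ≺ c -> a ≺ c.
Proof.
  intros a b c H1 H2. apply lt_ex in H1, H2. destruct H1 as [d ->]. destruct H2 as [e ->].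
  apply lt_ex. exists (d ⊕ e ⊕ 𝟙). ring.
Qed.

Lemma lt_0_S : forall n, 𝟘 ≺ n ⊕ 𝟙.
Proof. intros n. apply lt_ex. exists n. ring. Qed.

Lemma lt_S : forall n, n ≺ n ⊕ 𝟙.
Proof. intros n. apply A8; auto. Qed.

Lemma zero_or_S : forall n, n = 𝟘 \/ exists m, n = m ⊕ 𝟙.
Proof.
  intros n. pose proof (ind0g (fOr (fEq (tvar 0) tzero) (fLt tzero (tvar 0))) ltac:(simpl; tauto) rho0 sig Hsig) as G.
  simpl in G. destruct G with n as [H|H]; auto.
  - intros a _. right. apply lt_0_S.
  - right. apply lt_ex in H. destruct H as [d ->]. exists d. ring.
Qed.

Lemma trich : forall m n, m ≺ n \/ m = n \/ n ≺ m.
Proof.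
  intros m.
  ind0 (fOr (fLt (tvar 1) (tvar 0)) (fOr (fEq (tvar 1) (tvar 0)) (fLt (tvar 0) (tvar 1)))) (scons m rho0).
  - destruct (zero_or_S m) as [->|[k ->]]; auto. right; right; apply lt_0_S.
  - intros n [H|[H|H]].
    + left. apply A8; auto.
    + left. subst. apply lt_S.
    + apply lt_ex in H. destruct H as [d ->].
      destruct (zero_or_S d) as [->|[e ->]].
      * right; left. ring.
      * right; right. apply lt_ex. exists e. ring.
Qed.

Definition le (a b : N) := a ≺ b ⊕ 𝟙.

Lemma le_iff : forall a b, le a b <-> a ≺ b \/ a = b.
Proof. intros; apply A8. Qed.

Lemma le_ex : forall a b, le a b <-> exists d, b = a ⊕ d.
Proof.
  intros a b. unfold le. rewrite lt_ex. split; intros [d Hd]; exists d.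
  - apply (add_cancel_r 𝟙). rewrite Hd; ring.
  - rewrite Hd; ring.
Qed.

Lemma le_refl : forall a, le a a.
Proof. intros; apply lt_S. Qed.

Lemma lt_le : forall a b, a ≺ b -> le a b.
Proof. intros; apply le_iff; auto. Qed.

Lemma le_trans : forall a b c, le a b -> le b c -> le a c.
Proof.
  intros a b c H1 H2. apply le_ex in H1, H2. destruct H1 as [d ->]. destruct H2 as [e ->].
  apply le_ex. exists (d ⊕ e). ring.
Qed.

Lemma lt_le_trans : forall a b c, a ≺ b -> le b c -> a ≺ c.
Proof.
  intros a b c H1 H2. apply le_iff in H2. destruct H2 as [H2| ->]; auto. eapply lt_trans; eauto.
Qed.

Lemma le_lt_trans : forall a b c, le a b -> b ≺ c -> a ≺ c.
Proof.
  intros a b c H1 H2. apply le_iff in H1. destruct H1 as [H1| ->]; auto. eapply lt_trans; eauto.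
Qed.

Lemma lt_le_S : forall a b, a ≺ b <-> le (a ⊕ 𝟙) b.
Proof.
  intros a b. rewrite lt_ex, le_ex. split; intros [d Hd]; exists d; rewrite Hd; ring.
Qed.

Lemma not_lt : forall a b, ~ a ≺ b -> le b a.
Proof.
  intros a b H. destruct (trich a b) as [H1|[H1|H1]]; [tauto| subst; apply le_refl | apply lt_le; auto].
Qed.

Lemma not_le : forall a b, ~ le a b -> b ≺ a.
Proof.
  intros a b H. destruct (trich a b) as [H1|[H1|H1]]; auto; exfalso; apply H; [apply lt_le; auto| subst; apply le_refl].
Qed.

Lemma lt_not_le : forall a b, a ≺ b -> ~ le b a.
Proof. intros a b H1 H2. apply (lt_irrefl a). eapply lt_le_trans; eauto. Qed.

Lemma le_add_r : forall a b, le a (a ⊕ b).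
Proof. intros; apply le_ex; eauto. Qed.

Lemma le_add_l : forall a b, le a (b ⊕ a).
Proof. intros; apply le_ex; exists b; ring. Qed.

Lemma lt_add_r : forall a b c, a ≺ b -> a ⊕ c ≺ b ⊕ c.
Proof. intros a b c H. apply lt_ex in H. destruct H as [d ->]. apply lt_ex. exists d. ring. Qed.

Lemma lt_add_l : forall a b c, a ≺ b -> c ⊕ a ≺ c ⊕ b.
Proof. intros a b c H. rewrite (add_comm c a), (add_comm c b). apply lt_add_r; auto. Qed.

Lemma le_add_mono : forall a b c d, le a b -> le c d -> le (a ⊕ c) (b ⊕ d).
Proof.
  intros a b c d H1 H2. apply le_ex in H1, H2. destruct H1 as [x ->]. destruct H2 as [y ->].
  apply le_ex. exists (x ⊕ y). ring.
Qed.

Lemma lt_add_cancel_r : forall a b c, a ⊕ c ≺ b ⊕ c -> a ≺ b.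
Proof.
  intros a b c H. destruct (trich a b) as [H1|[H1|H1]]; auto.
  - subst. exfalso; apply (lt_irrefl _ H).
  - exfalso. apply (lt_irrefl (a ⊕ c)). eapply lt_trans; eauto. apply lt_add_r; auto.
Qed.

Lemma lt_mul_r : forall a b c, a ≺ b -> 𝟘 ≺ c -> a ⊗ c ≺ b ⊗ c.
Proof.
  intros a b c H1 H2. apply lt_ex in H1, H2. destruct H1 as [d ->]. destruct H2 as [e ->].
  apply lt_ex. exists (d ⊗ (𝟘 ⊕ e ⊕ 𝟙) ⊕ e). ring.
Qed.

Lemma le_mul_r : forall a b c, le a b -> le (a ⊗ c) (b ⊗ c).
Proof.
  intros a b c H1. apply le_ex in H1. destruct H1 as [d ->]. apply le_ex. exists (d ⊗ c). ring.
Qed.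

Lemma le_mul_mono : forall a b c d, le a b -> le c d -> le (a ⊗ c) (b ⊗ d).
Proof.
  intros a b c d H1 H2. apply le_ex in H1, H2. destruct H1 as [x ->]. destruct H2 as [y ->].
  apply le_ex. exists (a ⊗ y ⊕ x ⊗ c ⊕ x ⊗ y). ring.
Qed.

Lemma le_0 : forall a, le 𝟘 a.
Proof. intros; apply le_ex; exists a; ring. Qed.

Lemma le_0_eq : forall a, le a 𝟘 -> a = 𝟘.
Proof. intros a H. apply le_iff in H. destruct H as [H|H]; auto. exfalso; apply (A7 _ H). Qed.

Lemma pos_S : forall a, 𝟘 ≺ a -> exists b, a = b ⊕ 𝟙.
Proof. intros a H. apply lt_ex in H. destruct H as [d ->]. exists d; ring. Qed.

Lemma le_mul_pos : forall a b, 𝟘 ≺ b -> le a (a ⊗ b).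
Proof. intros a b H. destruct (pos_S _ H) as [c ->]. apply le_ex. exists (a ⊗ c). ring. Qed.

Lemma mul_pos : forall a b, 𝟘 ≺ a -> 𝟘 ≺ b -> 𝟘 ≺ a ⊗ b.
Proof.
  intros a b H1 H2. destruct (pos_S _ H1) as [c ->]. destruct (pos_S _ H2) as [d ->].
  apply lt_ex. exists (c ⊗ d ⊕ c ⊕ d). ring.
Qed.

Lemma mul_cancel_r : forall a b c, 𝟘 ≺ c -> a ⊗ c = b ⊗ c -> a = b.
Proof.
  intros a b c Hc H. destruct (trich a b) as [H1|[H1|H1]]; auto; exfalso.
  - apply (lt_irrefl (a ⊗ c)). rewrite H at 2. apply lt_mul_r; auto.
  - apply (lt_irrefl (a ⊗ c)). rewrite H at 1. apply lt_mul_r; auto.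
Qed.


Lemma division : forall d, 𝟘 ≺ d -> forall a, exists q r, r ≺ d /\ a = q ⊗ d ⊕ r.
Proof.
  intros d Hd.
  pose proof (ind1 (fBEx (tvar 2) (fEq (tvar 2) (tadd (tmul (tvar 1) (tvar 3)) (tvar 0))))
     ltac:(simpl; tauto) (scons d rho0) sig Hsig) as G. simpl in G.
  intros a. destruct G with a as [q [r [H1 H2]]].
  - exists 𝟘, 𝟘. split; auto. ring.
  - intros b [q [r [H1 H2]]].
    apply lt_le_S in H1. apply le_iff in H1. destruct H1 as [H1|H1].
    + exists q, (r ⊕ 𝟙). split; auto. rewrite H2; ring.
    + exists (q ⊕ 𝟙), 𝟘. split; auto. rewrite H2, <- H1. ring.
  - exists q, r; auto.
Qed.

Definition Dvd (a b : N) := exists e, b = a ⊗ e.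

Lemma dvd_refl : forall a, Dvd a a.
Proof. intros a; exists 𝟙; ring. Qed.
Lemma dvd_1 : forall a, Dvd 𝟙 a.
Proof. intros a; exists a; ring. Qed.
Lemma dvd_0 : forall a, Dvd a 𝟘.
Proof. intros a; exists 𝟘; ring. Qed.
Lemma dvd_trans : forall a b c, Dvd a b -> Dvd b c -> Dvd a c.
Proof. intros a b c [x ->] [y ->]. exists (x ⊗ y); ring. Qed.
Lemma dvd_mul_r : forall a b c, Dvd a b -> Dvd a (b ⊗ c).
Proof. intros a b c [x ->]. exists (x ⊗ c); ring. Qed.
Lemma dvd_mul_l : forall a b c, Dvd a b -> Dvd a (c ⊗ b).
Proof. intros a b c [x ->]. exists (x ⊗ c); ring. Qed.
Lemma dvd_add : forall a b c, Dvd a b -> Dvd a c -> Dvd a (b ⊕ c).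
Proof. intros a b c [x ->] [y ->]. exists (x ⊕ y); ring. Qed.

Lemma eq_0_or_pos : forall a, a = 𝟘 \/ 𝟘 ≺ a.
Proof. intros a. destruct (zero_or_S a) as [H|[m ->]]; auto. right; apply lt_0_S. Qed.

Lemma dvd_sub : forall a b c, Dvd a (b ⊕ c) -> Dvd a b -> Dvd a c.
Proof.
  intros a b c [x Hx] [y Hy].
  destruct (eq_0_or_pos a) as [Ha|Ha].
  - subst a. exists 𝟘. rewrite mul_0_l in *. subst b. rewrite add_0_l in Hx. rewrite Hx; ring.
  - destruct (classic (x ≺ y)) as [H|H].
    + exfalso. apply (lt_not_le (a ⊗ x) (a ⊗ y)).
      * rewrite !(mul_comm a). apply lt_mul_r; auto.
      * rewrite <- Hx, <- Hy. apply le_add_r.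
    + apply not_lt in H. apply le_ex in H. destruct H as [w ->]. exists w.
      apply (add_cancel_l b). rewrite Hx, Hy. ring.
Qed.

Lemma dvd_pos : forall a b, Dvd a b -> 𝟘 ≺ b -> 𝟘 ≺ a.
Proof.
  intros a b [x ->] H. destruct (eq_0_or_pos a) as [Ha|Ha]; auto. subst; rewrite mul_0_l in H.
  exfalso; apply (lt_irrefl _ H).
Qed.

Lemma dvd_le : forall a b, Dvd a b -> 𝟘 ≺ b -> le a b.
Proof.
  intros a b Hd Hb. destruct Hd as [x Hx]. subst b.
  destruct (eq_0_or_pos x) as [Hx|Hx].
  - subst. rewrite A5 in Hb. exfalso; apply (lt_irrefl _ Hb).
  - apply le_mul_pos; auto.
Qed.

Lemma dvd_one : forall a, Dvd a 𝟙 -> a = 𝟙.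
Proof.
  intros a H. assert (H1 : le a 𝟙) by (apply dvd_le; auto; rewrite <- (add_0_l 𝟙); apply lt_0_S).
  assert (H2 : 𝟘 ≺ a) by (apply (dvd_pos a 𝟙); auto; rewrite <- (add_0_l 𝟙); apply lt_0_S).
  apply le_iff in H1. destruct H1 as [H1|H1]; auto. exfalso.
  rewrite <- (add_0_l 𝟙) in H1. apply A8 in H1. destruct H1 as [H1|H1].
  - apply (A7 _ H1).
  - subst. apply (lt_irrefl _ H2).
Qed.

Definition DvdB (a b : N) := exists e, e ≺ b ⊕ 𝟙 /\ b = a ⊗ e.

Lemma dvdB_iff : forall a b, DvdB a b <-> Dvd a b.
Proof.
  intros a b. split.
  - intros [e [_ H]]; exists e; auto.
  - intros [e He]. destruct (eq_0_or_pos b) as [Hb|Hb].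
    + exists 𝟘. split. rewrite Hb, add_0_l. rewrite <- (add_0_l 𝟙); apply lt_0_S. rewrite Hb; ring.
    + exists e. split; auto. fold (le e b). rewrite He, mul_comm. apply le_mul_pos.
      apply (dvd_pos a b); auto. exists e; auto.
Qed.

Lemma LNP (phi : form) : isSigma00 phi -> forall rho sigma, set_env M sigma ->
  forall n, sat M (scons n rho) sigma phi ->
  exists m, sat M (scons m rho) sigma phi /\ forall m', m' ≺ m -> ~ sat M (scons m' rho) sigma phi.
Proof.
  intros Hphi rho sigma Hs n Hn. apply NNPP. intros Hno.
  assert (G := ind0g (fBAll (tvar 0) (fNeg (ren_form (up S) phi)))
      ltac:(simpl; apply isSigma00_ren; auto) rho sigma Hs).
  simpl in G.
  assert (E : forall j a, sat M (scons a (scons j rho)) sigma (ren_form (up S) phi) <-> sat M (scons a rho) sigma phi).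
  { intros j a. rewrite sat_ren. apply sat_ext. intros [|k]; reflexivity. }
  setoid_rewrite E in G.
  assert (K : forall a m', m' ≺ a -> ~ sat M (scons m' rho) sigma phi).
  { apply G.
    - intros a Ha; exfalso; apply (A7 _ Ha).
    - intros a IH m' Hm'. apply A8 in Hm'. destruct Hm' as [Hm'|Hm']; auto.
      subst m'. intros Ha. apply Hno. exists a; split; auto. }
  apply (K (n ⊕ 𝟙) n); auto. apply lt_S.
Qed.

Definition Cop (a b : N) := forall g, le g a -> Dvd g a -> Dvd g b -> g = 𝟙.

Lemma euclid : forall a b c, 𝟘 ≺ a -> 𝟘 ≺ b -> Cop a b -> Dvd a (b ⊗ c) -> Dvd a c.
Proof.
  intros a b c Ha Hb Hc Habc.
  pose (phi := fAnd (fLt tzero (tvar 0)) (fBEx (tadd (tmul (tvar 0) (tvar 2)) tone) (fEq (tmul (tvar 1) (tvar 3)) (tmul (tvar 2) (tvar 0))))).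
  assert (Hs : forall d, sat M (scons d (scons a (scons c rho0))) sig phi <-> 𝟘 ≺ d /\ Dvd a (d ⊗ c)).
  { intros d. simpl. fold (DvdB a (d ⊗ c)). rewrite dvdB_iff. tauto. }
  destruct (LNP phi ltac:(simpl; tauto) (scons a (scons c rho0)) sig Hsig b) as [m [Hm Hmin]].
  { apply Hs; auto. }
  rewrite Hs in Hm. setoid_rewrite Hs in Hmin. destruct Hm as [Hm0 Hm].
  assert (Key : forall x, 𝟘 ≺ x -> Dvd a (x ⊗ c) -> Dvd m x).
  { intros x Hx Hxc. destruct (division m Hm0 x) as [q [r [Hr Hq]]].
    assert (Hrc : Dvd a (r ⊗ c)).
    { apply (dvd_sub a (q ⊗ m ⊗ c)).
      - replace (q ⊗ m ⊗ c ⊕ r ⊗ c) with (x ⊗ c) by (rewrite Hq; ring). auto.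
      - replace (q ⊗ m ⊗ c) with (q ⊗ (m ⊗ c)) by ring. apply dvd_mul_l; auto. }
    destruct (eq_0_or_pos r) as [Hr0|Hr0].
    - exists q. rewrite Hq, Hr0. ring.
    - exfalso. apply (Hmin r Hr); auto. }
  assert (Hma : Dvd m a) by (apply Key; auto; apply dvd_mul_r, dvd_refl).
  assert (Hmb : Dvd m b) by (apply Key; auto).
  assert (Hm1 : m = 𝟙) by (apply Hc; auto; apply dvd_le; auto).
  subst m. rewrite mul_1_l in Hm. auto.
Qed.


Lemma pair_lt : forall x y u v, x ⊕ y ≺ u ⊕ v -> pair M x y ≺ pair M u v.
Proof.
  intros x y u v H. unfold pair.
  set (s := x ⊕ y) in *. set (s' := u ⊕ v) in *.
  apply lt_le_trans with ((s ⊕ 𝟙) ⊗ (s ⊕ 𝟙)).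
  - apply lt_ex. exists (y ⊕ s). unfold s. ring.
  - apply lt_le_S in H. apply le_trans with (s' ⊗ s').
    + apply le_mul_mono; auto.
    + apply le_add_r.
Qed.

Lemma pair_inj : forall x y u v, pair M x y = pair M u v -> x = u /\ y = v.
Proof.
  intros x y u v H. destruct (trich (x ⊕ y) (u ⊕ v)) as [H1|[H1|H1]].
  - exfalso. apply pair_lt in H1. rewrite H in H1. apply (lt_irrefl _ H1).
  - unfold pair in H. rewrite H1 in H. apply add_cancel_l in H. subst u.
    split; auto. apply add_cancel_l in H1; auto.
  - exfalso. apply pair_lt in H1. rewrite H in H1. apply (lt_irrefl _ H1).
Qed.

Lemma pair_le_l : forall x y, le x (pair M x y).
Proof. intros; unfold pair; apply le_add_l. Qed.

Lemma pair_le_r : forall x y, le y (pair M x y).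
Proof.
  intros x y. unfold pair. apply le_trans with (x ⊕ y). apply le_add_l.
  destruct (eq_0_or_pos (x ⊕ y)) as [H|H].
  - rewrite H. apply le_0.
  - apply le_trans with ((x ⊕ y) ⊗ (x ⊕ y)). apply le_mul_pos; auto. apply le_add_r.
Qed.

Lemma pair_mono_l : forall t T i, t ≺ T -> pair M t i ≺ pair M T i.
Proof. intros; apply pair_lt; apply lt_add_r; auto. Qed.

Definition tlift (t : term) : term := ren_term S t.
Lemma eval_tlift : forall a r t, eval M (scons a r) (tlift t) = eval M r t.
Proof. intros; unfold tlift; rewrite eval_ren; apply eval_ext; reflexivity. Qed.

Definition fle (a b : term) : form := fLt a (tadd b tone).
Definition fdvd (a b : term) : form := fBEx (tadd b tone) (fEq (tlift b) (tmul (tlift a) (tvar 0))).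
Definition fcop (a b : term) : form :=
  fBAll (tadd a tone) (fImp (fdvd (tvar 0) (tlift a)) (fImp (fdvd (tvar 0) (tlift b)) (fEq (tvar 0) tone))).
Definition tpair (x y : term) : term := tadd (tmul (tadd x y) (tadd x y)) x.
Definition tq (i m : term) : term := tadd (tmul (tadd i tone) m) tone.
Definition qq (m i : N) : N := (i ⊕ 𝟙) ⊗ m ⊕ 𝟙.

Lemma sat_fle : forall r sigma a b, sat M r sigma (fle a b) <-> le (eval M r a) (eval M r b).
Proof. reflexivity. Qed.
Lemma eval_tpair : forall r x y, eval M r (tpair x y) = pair M (eval M r x) (eval M r y).
Proof. reflexivity. Qed.
Lemma eval_tq : forall r i m, eval M r (tq i m) = qq (eval M r m) (eval M r i).
Proof. reflexivity. Qed.
Lemma sat_fdvd : forall r sigma a b, sat M r sigma (fdvd a b) <-> Dvd (eval M r a) (eval M r b).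
Proof.
  intros. rewrite <- dvdB_iff. unfold fdvd, DvdB. simpl. split; intros [e [H1 H2]]; exists e; rewrite ?eval_tlift in *; auto.
Qed.
Opaque fdvd.
Lemma sat_fcop : forall r sigma a b, sat M r sigma (fcop a b) <-> Cop (eval M r a) (eval M r b).
Proof.
  intros. unfold fcop, Cop. simpl. setoid_rewrite sat_fdvd. simpl. setoid_rewrite eval_tlift. reflexivity.
Qed.
Lemma s00_fle : forall a b, isSigma00 (fle a b). Proof. simpl; auto. Qed.
Lemma s00_fdvd : forall a b, isSigma00 (fdvd a b). Proof. Transparent fdvd. simpl; auto. Qed.
Lemma s00_fcop : forall a b, isSigma00 (fcop a b). Proof. Transparent fdvd. simpl; auto. Qed.
Opaque fdvd fcop fle tpair tq.


Lemma CA0 (phi : form) : isSigma00 phi -> forall rho sigma, set_env M sigma ->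
  exists X, sets M X /\ forall a, X a <-> sat M (scons a rho) sigma phi.
Proof.
  intros Hphi rho sigma Hs. destruct HM as [_ [_ HCA]].
  destruct (HCA (fEx (ren_form S phi)) (fAll (ren_form S phi)) ltac:(simpl; apply isSigma00_ren; auto)
    ltac:(simpl; apply isSigma00_ren; auto) rho sigma Hs) as [X [HX HXa]].
  - intros a. simpl. setoid_rewrite sat_lift. split; [intros [_ H] b; auto | intros H; exists 𝟘; auto].
  - exists X; split; auto. intros a. rewrite HXa. simpl. setoid_rewrite sat_lift.
    split; [intros [_ H]; auto | intros H; exists 𝟘; auto].
Qed.


Ltac s00 := simpl; repeat (match goal with
  | |- _ /\ _ => split
  | |- isSigma00 (fdvd _ _) => apply s00_fdvd
  | |- isSigma00 (fcop _ _) => apply s00_fcop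
  | |- isSigma00 (fle _ _) => apply s00_fle
  | |- True => exact I
  end; simpl).

Lemma exists_M0 : forall k, exists m, 𝟘 ≺ m /\ forall d, d ≺ k -> Dvd (d ⊕ 𝟙) m.
Proof.
  pose proof (ind1 (fAnd (fLt tzero (tvar 0)) (fBAll (tvar 1) (fdvd (tadd (tvar 0) tone) (tvar 1))))
     ltac:(s00) rho0 sig Hsig) as G.
  simpl in G. setoid_rewrite sat_fdvd in G. simpl in G.
  apply G.
  - exists 𝟙. split. rewrite <- (add_0_l 𝟙); apply lt_0_S. intros d Hd; exfalso; apply (A7 _ Hd).
  - intros j [m [Hm1 Hm2]]. exists (m ⊗ (j ⊕ 𝟙)). split.
    + apply mul_pos; auto; apply lt_0_S.
    + intros d Hd. apply A8 in Hd. destruct Hd as [Hd| ->].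
      * apply dvd_mul_r; auto.
      * apply dvd_mul_l, dvd_refl.
Qed.

Lemma exists_Q : forall m k, exists Q, 𝟘 ≺ Q /\ forall i, i ≺ k -> Dvd (qq m i) Q.
Proof.
  intros m.
  pose proof (ind1 (fAnd (fLt tzero (tvar 0)) (fBAll (tvar 1) (fdvd (tq (tvar 0) (tvar 3)) (tvar 1))))
     ltac:(s00) (scons m rho0) sig Hsig) as G.
  simpl in G. setoid_rewrite sat_fdvd in G. setoid_rewrite eval_tq in G. simpl in G.
  apply G.
  - exists 𝟙. split. rewrite <- (add_0_l 𝟙); apply lt_0_S. intros d Hd; exfalso; apply (A7 _ Hd).
  - intros j [Q [Hm1 Hm2]]. exists (Q ⊗ qq m j). split.
    + apply mul_pos; auto. unfold qq. apply lt_0_S.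
    + intros d Hd. apply A8 in Hd. destruct Hd as [Hd| ->].
      * apply dvd_mul_r; auto.
      * apply dvd_mul_l, dvd_refl.
Qed.


Lemma one_pos : 𝟘 ≺ 𝟙.
Proof. rewrite <- (add_0_l 𝟙); apply lt_0_S. Qed.

Lemma qq_pos : forall m i, 𝟘 ≺ qq m i.
Proof. intros; unfold qq; apply lt_0_S. Qed.

Lemma qq_ne1 : forall m i, 𝟘 ≺ m -> qq m i <> 𝟙.
Proof.
  intros m i Hm H. unfold qq in H. assert (H' : (i ⊕ 𝟙) ⊗ m ⊕ 𝟙 = 𝟘 ⊕ 𝟙) by (rewrite H; ring). clear H. rename H' into H. apply add_cancel_r in H.
  assert (G : 𝟘 ≺ (i ⊕ 𝟙) ⊗ m) by (apply mul_pos; auto; apply lt_0_S).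
  rewrite H in G. apply (lt_irrefl _ G).
Qed.

Section Codes.
Variables m k Q : N.
Hypothesis Hm0 : 𝟘 ≺ m.
Hypothesis Hmd : forall d, d ≺ k -> Dvd (d ⊕ 𝟙) m.
Hypothesis HQ0 : 𝟘 ≺ Q.
Hypothesis HQ : forall i, i ≺ k -> Dvd (qq m i) Q.

Lemma qq_core : forall i j, i ≺ j -> j ≺ k -> forall g, Dvd g (qq m i) -> Dvd g (qq m j) -> g = 𝟙.
Proof.
  intros i j Hij Hjk g Hi Hj. destruct (ex_of_lt _ _ Hij) as [e He].
  assert (Hek : e ≺ k).
  { apply lt_trans with j; auto. apply lt_ex. exists i. rewrite He; ring. }
  assert (Id : (j ⊕ 𝟙) ⊗ qq m i = (i ⊕ 𝟙) ⊗ qq m j ⊕ (e ⊕ 𝟙)) by (rewrite He; unfold qq; ring).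
  assert (G1 : Dvd g (e ⊕ 𝟙)).
  { apply (dvd_sub g ((i ⊕ 𝟙) ⊗ qq m j)). rewrite <- Id. apply dvd_mul_l; auto. apply dvd_mul_l; auto. }
  assert (G2 : Dvd g ((i ⊕ 𝟙) ⊗ m)) by (apply dvd_mul_l; eapply dvd_trans; eauto).
  apply dvd_one. apply (dvd_sub g ((i ⊕ 𝟙) ⊗ m)); auto.
Qed.

Lemma qq_cop : forall i j, i ≺ k -> j ≺ k -> i <> j -> forall g, Dvd g (qq m i) -> Dvd g (qq m j) -> g = 𝟙.
Proof.
  intros i j Hi Hj Hij g H1 H2. destruct (trich i j) as [H|[H|H]].
  - eapply qq_core; eauto.
  - tauto.
  - eapply qq_core; eauto.
Qed.

Definition Code (s : N) := Dvd s Q /\ forall i, i ≺ k -> Dvd (qq m i) s \/ Cop (qq m i) s.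

Lemma code_1 : Code 𝟙.
Proof. split. apply dvd_1. intros i _. right. intros g _ _ H. apply dvd_one; auto. Qed.

Lemma code_pos : forall s, Code s -> 𝟘 ≺ s.
Proof. intros s [H _]. eapply dvd_pos; eauto. Qed.

Lemma cop_of_dvd : forall g a s, 𝟘 ≺ a -> Dvd g a -> Cop a s -> Cop g s.
Proof.
  intros g a s Ha Hg Hc h Hh1 Hh2 Hh3. apply Hc.
  - apply le_trans with g; auto. exact (dvd_le g a Hg Ha).
  - apply dvd_trans with g; auto.
  - auto.
Qed.

Lemma code_ext : forall s i, Code s -> i ≺ k -> ~ Dvd (qq m i) s -> Code (s ⊗ qq m i).
Proof.
  intros s i [Hs1 Hs2] Hi Hn.
  assert (Hsp : 𝟘 ≺ s) by (eapply dvd_pos; eauto).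
  assert (Hc : Cop (qq m i) s) by (destruct (Hs2 i Hi); tauto).
  split.
  - destruct Hs1 as [r Hr].
    assert (Hqr : Dvd (qq m i) r).
    { apply (euclid (qq m i) s r); auto. apply qq_pos. rewrite <- Hr; auto. }
    destruct Hqr as [r' Hr']. exists r'. rewrite Hr, Hr'. ring.
  - intros j Hj. destruct (classic (j = i)) as [->|Hji].
    + left. apply dvd_mul_l, dvd_refl.
    + destruct (Hs2 j Hj) as [H|H].
      * left. apply dvd_mul_r; auto.
      * right. intros g Hg1 Hg2 Hg3.
        assert (Hgp : 𝟘 ≺ g) by (apply (dvd_pos g (qq m j) Hg2 (qq_pos m j))).
        assert (Hgs : Cop g s) by (apply (cop_of_dvd g (qq m j) s (qq_pos m j) Hg2 H)).
        assert (Hgi : Dvd g (qq m i)) by (apply (euclid g s); auto).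
        exact (qq_cop j i Hj Hi Hji g Hg2 Hgi).
Qed.

Lemma code_bad : forall s i j, Code s -> i ≺ k -> j ≺ k -> j <> i -> Cop (qq m j) s ->
  Dvd (qq m j) (s ⊗ qq m i) -> False.
Proof.
  intros s i j Hs Hi Hj Hji Hc Hd.
  assert (Hsp : 𝟘 ≺ s) by (apply code_pos; auto).
  assert (G : Dvd (qq m j) (qq m i)) by (apply (euclid _ s); auto; apply qq_pos).
  apply (qq_ne1 m j Hm0). exact (qq_cop j i Hj Hi Hji (qq m j) (dvd_refl _) G).
Qed.

Definition Dies (b i : N) := forall x, le b x -> ~ sig 0 (pair M x i).
Definition Good (s b : N) := Code s /\ forall i, i ≺ k -> Dvd (qq m i) s -> Dies b i.
Definition Hsem (n : N) := exists s b, le n s /\ Good s b.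

End Codes.

Definition fCode (s kt mt Qt : term) : form :=
  fAnd (fdvd s Qt) (fBAll kt (fOr (fdvd (tq (tvar 0) (tlift mt)) (tlift s)) (fcop (tq (tvar 0) (tlift mt)) (tlift s)))).

Lemma sat_fCode : forall r sigma s kt mt Qt, sat M r sigma (fCode s kt mt Qt) <->
  Code (eval M r mt) (eval M r kt) (eval M r Qt) (eval M r s).
Proof.
  intros. unfold fCode, Code. simpl. setoid_rewrite sat_fdvd. setoid_rewrite sat_fcop.
  setoid_rewrite eval_tq. simpl. setoid_rewrite eval_tlift. reflexivity.
Qed.
Lemma s00_fCode : forall s kt mt Qt, isSigma00 (fCode s kt mt Qt).
Proof. intros; unfold fCode; s00. Qed.
Opaque fCode.

Definition Hform : form :=
  fEx (fAll (fBEx (tadd (tvar 1) tone) (fBEx (tadd (tvar 2) tone)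
   (fAnd (fEq (tvar 3) (tpair (tvar 1) (tvar 0)))
   (fAnd (fle (tvar 4) (tvar 1))
   (fAnd (fCode (tvar 1) (tvar 5) (tvar 6) (tvar 7))
         (fBAll (tvar 5) (fImp (fdvd (tq (tvar 0) (tvar 7)) (tvar 2))
            (fImp (fle (tvar 1) (tvar 3)) (fNeg (fMem (tpair (tvar 3) (tvar 0)) 0))))))))))).

Lemma sat_Hform : forall k m Q n,
  sat M (scons n (scons k (scons m (scons Q rho0)))) sig Hform <-> Hsem m k Q n.
Proof.
  intros k m Q n. unfold Hform. simpl.
  setoid_rewrite sat_fCode. setoid_rewrite sat_fdvd. setoid_rewrite sat_fle.
  setoid_rewrite eval_tq. setoid_rewrite eval_tpair. simpl. split.
  - intros [p Hp]. destruct (Hp 𝟘) as [s [_ [b [_ [Hpe [Hn [Hc _]]]]]]].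
    exists s, b. split; auto. split; auto. intros i Hi Hd x Hx.
    destruct (Hp x) as [s' [_ [b' [_ [Hpe' [_ [_ Hall]]]]]]].
    rewrite Hpe in Hpe'. apply pair_inj in Hpe'. destruct Hpe' as [<- <-]. apply Hall; auto.
  - intros [s [b [Hn [Hc Hg]]]]. exists (pair M s b). intros x. exists s. split.
    + apply pair_le_l.
    + exists b. split. apply pair_le_r. split; [reflexivity|split; [auto|split; [auto|]]]. intros i Hi Hd Hx. apply (Hg i Hi Hd x Hx).
Qed.

Lemma dies_mono : forall b b2 i, le b b2 -> Dies b i -> Dies b2 i.
Proof. intros b b2 i H1 H2 x Hx. apply H2. eapply le_trans; eauto. Qed.

Lemma max_good : ISigma02 M -> forall k, exists m s b,
  (forall i, i ≺ k -> Dvd (qq m i) s -> Dies b i) /\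
  (forall i, i ≺ k -> ~ Dvd (qq m i) s -> forall b', ~ Dies b' i).
Proof.
  intros HI2 k.
  destruct (exists_M0 k) as [m [Hm0 Hmd]]. destruct (exists_Q m k) as [Q [HQ0 HQ]].
  apply NNPP. intros Hno.
  assert (All : forall n, Hsem m k Q n).
  { intros n. apply (sat_Hform k m Q n).
    apply (HI2 Hform ltac:(unfold Hform; s00; repeat apply s00_fCode) (scons k (scons m (scons Q rho0))) sig Hsig).
    - apply sat_Hform. exists 𝟙, 𝟘. split. apply le_0. split. apply code_1; auto.
      intros i Hi Hd. exfalso. apply (qq_ne1 m i Hm0). apply dvd_one; auto.
    - intros n' Hn'. apply sat_Hform in Hn'. apply sat_Hform.
      destruct Hn' as [s [b [Hns [Hc Hg]]]].
      destruct (classic (exists i, i ≺ k /\ ~ Dvd (qq m i) s /\ exists b', Dies b' i)) as [[i [Hi [Hnd [b' Hb']]]]|Hnot].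
      2:{ exfalso. apply Hno. exists m, s, b. split. intros i Hi Hd; apply Hg; auto.
          intros i Hi Hnd b' Hb'. apply Hnot. eauto. }
      exists (s ⊗ qq m i), (b ⊕ b'). split; [|split].
      + assert (E : s ⊗ qq m i = s ⊕ s ⊗ ((i ⊕ 𝟙) ⊗ m)) by (unfold qq; ring).
        rewrite E. apply le_add_mono; auto.
        assert (Hsp : 𝟘 ≺ s) by (exact (code_pos m k Q HQ0 s Hc)).
        assert (G : 𝟘 ≺ s ⊗ ((i ⊕ 𝟙) ⊗ m)) by (apply mul_pos; auto; apply mul_pos; auto; apply lt_0_S).
        apply lt_le_S in G. rewrite add_0_l in G. auto.
      + apply code_ext; auto.
      + intros j Hj Hd. destruct (classic (j = i)) as [->|Hji].
        * apply (dies_mono b'); [apply le_add_l| auto].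
        * destruct Hc as [Hc1 Hc2]. destruct (Hc2 j Hj) as [H|H].
          -- apply (dies_mono b); [apply le_add_r| apply Hg; auto].
          -- exfalso. exact (code_bad m k Q Hm0 Hmd HQ0 s i j (conj Hc1 Hc2) Hi Hj Hji H Hd). }
  destruct (All (Q ⊕ 𝟙)) as [s [b [Hs [[Hc1 _] _]]]].
  apply (lt_not_le Q s). apply lt_le_S; auto. apply dvd_le; auto.
Qed.


Lemma spp_of_i2 : ISigma02 M -> forall k, exists I, sets M I /\
  forall i, I i <-> (i ≺ k /\ forall m, exists x, m ≺ x /\ sig 0 (pair M x i)).
Proof.
  intros HI2 k. destruct (max_good HI2 k) as [m [s [b [H1 H2]]]].
  destruct (CA0 (fAnd (fLt (tvar 0) (tvar 1)) (fNeg (fdvd (tq (tvar 0) (tvar 2)) (tvar 3))))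
    ltac:(s00) (scons k (scons m (scons s rho0))) sig Hsig) as [I [HI HIa]].
  exists I. split; auto. intros i. rewrite HIa. simpl. rewrite sat_fdvd, eval_tq. simpl.
  split.
  - intros [Hi Hnd]. split; auto. intros x.
    assert (G := H2 i Hi Hnd (x ⊕ 𝟙)). apply NNPP. intros Hno. apply G.
    intros y Hy Hc. apply Hno. exists y. split; auto. apply lt_le_S; auto.
  - intros [Hi Hinf]. split; auto. intros Hd.
    destruct (Hinf b) as [x [Hx Hc]]. apply (H1 i Hi Hd x); auto. apply lt_le; auto.
Qed.


Section TwoOne.
Variable p : form.
Hypothesis Hp : isSigma00 p.
Variable rho : nat -> N.

Definition P (n b x : N) := sat M (scons x (scons b (scons n rho))) sig p.

Definition pf (iy im ii off : nat) (v : nat) : nat :=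
  match v with 0 => iy | 1 => im | 2 => ii | S (S (S j)) => off + j end.
Definition pin (iy im ii off : nat) : form := ren_form (pf iy im ii off) p.

Lemma s00_pin : forall iy im ii off, isSigma00 (pin iy im ii off).
Proof. intros; unfold pin; apply isSigma00_ren; auto. Qed.

Lemma sat_pin : forall env iy im ii off, (forall j, env (off + j) = rho j) ->
  (sat M env sig (pin iy im ii off) <-> P (env ii) (env im) (env iy)).
Proof.
  intros env iy im ii off H. unfold pin, P. rewrite sat_ren. apply sat_ext.
  intros [|[|[|j]]]; simpl; auto.
Qed.
Opaque pin.

Definition Done (i m s : N) := m ≺ s /\ forall m', m' ≺ m ⊕ 𝟙 -> exists y, y ≺ s /\ ~ P i m' y.

Definition fdone (vi : nat) (tm ts : term) (off : nat) : form :=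
  fAnd (fLt tm ts) (fBAll (tadd tm tone) (fBEx (tlift ts) (fNeg (pin 0 1 (S (S vi)) (S (S off)))))).

Lemma s00_fdone : forall vi tm ts off, isSigma00 (fdone vi tm ts off).
Proof. intros; unfold fdone; simpl; repeat (first [exact I | apply s00_pin | apply conj]). Qed.

Lemma sat_fdone : forall env vi tm ts off, (forall j, env (off + j) = rho j) ->
  (sat M env sig (fdone vi tm ts off) <-> Done (env vi) (eval M env tm) (eval M env ts)).
Proof.
  intros env vi tm ts off H. unfold fdone, Done. simpl.
  assert (E : forall y m', sat M (scons y (scons m' env)) sig (pin 0 1 (S (S vi)) (S (S off))) <-> P (env vi) m' y).
  { intros. rewrite sat_pin; [reflexivity | intros j; apply H]. }
  setoid_rewrite E. setoid_rewrite eval_tlift. reflexivity.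
Qed.
Opaque fdone.

Definition Prog (i t : N) := exists m, m ≺ t ⊕ 𝟙 /\ Done i m (t ⊕ 𝟙) /\ ~ Done i m t.

Definition fprog (vi vt off : nat) : form :=
  fBEx (tadd (tvar vt) tone) (fAnd (fdone (S vi) (tvar 0) (tadd (tvar (S vt)) tone) (S off))
                                 (fNeg (fdone (S vi) (tvar 0) (tvar (S vt)) (S off)))).

Lemma s00_fprog : forall vi vt off, isSigma00 (fprog vi vt off).
Proof. intros; unfold fprog; simpl; repeat (first [exact I | apply s00_fdone | apply conj]). Qed.

Lemma sat_fprog : forall env vi vt off, (forall j, env (off + j) = rho j) ->
  (sat M env sig (fprog vi vt off) <-> Prog (env vi) (env vt)).
Proof.
  intros env vi vt off H. unfold fprog, Prog. simpl.
  assert (E1 : forall m, sat M (scons m env) sig (fdone (S vi) (tvar 0) (tadd (tvar (S vt)) tone) (S off)) <-> Done (env vi) m (env vt ⊕ 𝟙)).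
  { intros. rewrite sat_fdone; [reflexivity | intros j; apply H]. }
  assert (E2 : forall m, sat M (scons m env) sig (fdone (S vi) (tvar 0) (tvar (S vt)) (S off)) <-> Done (env vi) m (env vt)).
  { intros. rewrite sat_fdone; [reflexivity | intros j; apply H]. }
  setoid_rewrite E1. setoid_rewrite E2. reflexivity.
Qed.
Opaque fprog.

Definition First (x a : N) := exists t i, le t x /\ le i x /\ x = pair M t i /\ i ≺ a ⊕ 𝟙 /\ Prog i t.

Definition fFirst (vx : nat) (ta : term) (off : nat) : form :=
  fBEx (tadd (tvar vx) tone) (fBEx (tadd (tvar (S vx)) tone)
    (fAnd (fEq (tvar (S (S vx))) (tpair (tvar 1) (tvar 0)))
    (fAnd (fLt (tvar 0) (tadd (tlift (tlift ta)) tone)) (fprog 0 1 (S (S off)))))).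

Lemma s00_fFirst : forall vx ta off, isSigma00 (fFirst vx ta off).
Proof. intros; unfold fFirst; simpl; repeat (first [exact I | apply s00_fprog | apply conj]). Qed.

Lemma sat_fFirst : forall env vx ta off, (forall j, env (off + j) = rho j) ->
  (sat M env sig (fFirst vx ta off) <-> First (env vx) (eval M env ta)).
Proof.
  intros env vx ta off H. unfold fFirst, First. simpl.
  assert (E : forall i t, sat M (scons i (scons t env)) sig (fprog 0 1 (S (S off))) <-> Prog i t).
  { intros. rewrite sat_fprog; [reflexivity | intros j; apply H]. }
  setoid_rewrite E. setoid_rewrite eval_tpair. repeat setoid_rewrite eval_tlift. simpl. unfold le.
  split.
  - intros [t [Ht [i [Hi [H1 [H2 H3]]]]]]. exists t, i. tauto.
  - intros [t [i [Ht [Hi [H1 [H2 H3]]]]]]. exists t. split; auto. exists i. tauto.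
Qed.
Opaque fFirst.

Definition Snd (x y : N) := exists t i, le t x /\ le i x /\ x = pair M t i /\ y = i.

Definition fSnd (vx vy : nat) : form :=
  fBEx (tadd (tvar vx) tone) (fBEx (tadd (tvar (S vx)) tone)
    (fAnd (fEq (tvar (S (S vx))) (tpair (tvar 1) (tvar 0))) (fEq (tvar (S (S vy))) (tvar 0)))).

Lemma sat_fSnd : forall env vx vy, sat M env sig (fSnd vx vy) <-> Snd (env vx) (env vy).
Proof.
  intros env vx vy. unfold fSnd, Snd. simpl. setoid_rewrite eval_tpair. simpl. unfold le.
  split.
  - intros [t [Ht [i [Hi [H1 H2]]]]]. exists t, i. tauto.
  - intros [t [i [Ht [Hi [H1 H2]]]]]. exists t. split; auto. exists i. tauto.
Qed.
Lemma s00_fSnd : forall vx vy, isSigma00 (fSnd vx vy).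
Proof. intros; unfold fSnd; simpl; auto. Qed.
Opaque fSnd.

Definition Csem (a n : N) := exists x y, le x n /\ le y n /\ n = pair M x y /\
   ((First x a /\ Snd x y) \/ (~ First x a /\ y = a ⊕ 𝟙)).

Definition Cform : form :=
  fBEx (tadd (tvar 0) tone) (fBEx (tadd (tvar 1) tone) (fAnd (fEq (tvar 2) (tpair (tvar 1) (tvar 0)))
   (fOr (fAnd (fFirst 1 (tvar 3) 4) (fSnd 1 0)) (fAnd (fNeg (fFirst 1 (tvar 3) 4)) (fEq (tvar 0) (tadd (tvar 3) tone)))))).

Lemma s00_Cform : isSigma00 Cform.
Proof. unfold Cform; simpl; repeat (first [exact I | apply s00_fFirst | apply s00_fSnd | apply conj]). Qed.

Lemma sat_Cform : forall a n, sat M (scons n (scons a rho)) sig Cform <-> Csem a n.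
Proof.
  intros a n. unfold Cform, Csem. simpl.
  assert (E : forall y x, sat M (scons y (scons x (scons n (scons a rho)))) sig (fFirst 1 (tvar 3) 4) <-> First x a).
  { intros. rewrite sat_fFirst; [reflexivity | intros j; reflexivity]. }
  setoid_rewrite E. setoid_rewrite sat_fSnd. setoid_rewrite eval_tpair. simpl. unfold le.
  split.
  - intros [x [Hx [y [Hy H]]]]. exists x, y. tauto.
  - intros [x [y [Hx [Hy H]]]]. exists x. split; auto. exists y. tauto.
Qed.


Lemma done_mono_s : forall i m s s', Done i m s -> le s s' -> Done i m s'.
Proof.
  intros i m s s' [H1 H2] H3. split. eapply lt_le_trans; eauto.
  intros m' Hm'. destruct (H2 m' Hm') as [y [Hy Hy']]. exists y. split; auto. eapply lt_le_trans; eauto.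
Qed.

Lemma done_mono_m : forall i m m' s, Done i m s -> le m' m -> Done i m' s.
Proof.
  intros i m m' s [H1 H2] H3. split. eapply le_lt_trans; eauto.
  intros m'' Hm''. apply H2. eapply lt_le_trans; eauto. apply le_add_mono; auto. apply le_refl.
Qed.

Lemma sat_done_spec : forall i j s, sat M (scons s (scons j (scons i rho))) sig (fdone 2 (tvar 1) (tvar 0) 3) <-> Done i j s.
Proof. intros. rewrite sat_fdone; [reflexivity| intros; reflexivity]. Qed.

Lemma all_done : forall i, (exists s, Done i 𝟘 s) -> (forall j s, Done i j s -> exists s', Done i (j ⊕ 𝟙) s') ->
  forall j, exists s, Done i j s.
Proof.
  intros i Hb Hs.
  pose proof (ind1 (fdone 2 (tvar 1) (tvar 0) 3) ltac:(apply s00_fdone) (scons i rho) sig Hsig) as G.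
  simpl in G. setoid_rewrite sat_done_spec in G. apply G; auto.
  intros a [s Hd]. eapply Hs; eauto.
Qed.

Lemma inf_of_not_phi : forall i, (forall b, exists x, ~ P i b x) -> forall m, exists t, m ≺ t /\ Prog i t.
Proof.
  intros i H m.
  assert (AD : forall j, exists s, Done i j s).
  { apply all_done.
    - destruct (H 𝟘) as [y0 Hy0]. exists (y0 ⊕ 𝟙). split. apply lt_0_S.
      intros m' Hm'. rewrite add_0_l in Hm'. rewrite <- (add_0_l 𝟙) in Hm'. apply A8 in Hm'.
      destruct Hm' as [Hm' | ->]. exfalso; apply (A7 _ Hm'). exists y0. split; auto. apply lt_S.
    - intros j s [Hj Hall]. destruct (H (j ⊕ 𝟙)) as [y1 Hy1]. exists (s ⊕ y1 ⊕ 𝟙). split.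
      + apply lt_le_trans with (s ⊕ 𝟙). apply lt_add_r; auto. apply le_ex. exists y1. ring.
      + intros m' Hm'. apply A8 in Hm'. destruct Hm' as [Hm' | ->].
        * destruct (Hall m' Hm') as [y [Hy Hy']]. exists y. split; auto. apply lt_le_trans with s; auto.
          apply le_ex. exists (y1 ⊕ 𝟙). ring.
        * exists y1. split; auto. apply lt_ex. exists s. ring. }
  destruct (AD (m ⊕ 𝟙)) as [s Hs].
  destruct (LNP (fdone 2 (tvar 1) (tvar 0) 3) ltac:(apply s00_fdone) (scons (m ⊕ 𝟙) (scons i rho)) sig Hsig s)
    as [s0 [Hs0 Hmin]].
  { apply sat_done_spec; auto. }
  rewrite sat_done_spec in Hs0. setoid_rewrite sat_done_spec in Hmin.
  destruct Hs0 as [Hlt Hall].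
  destruct (pos_S s0) as [t Ht]. eapply le_lt_trans; [apply le_0|eauto].
  subst s0. exists t. split.
  - apply (lt_add_cancel_r m t 𝟙); auto.
  - exists (m ⊕ 𝟙). split; auto. split. split; auto. apply Hmin. apply lt_S.
Qed.

Lemma fin_of_phi : forall i b0, (forall x, P i b0 x) -> exists T, forall t, le T t -> ~ Prog i t.
Proof.
  intros i b0 H. apply NNPP. intros Hno.
  assert (HT : forall T, exists t, le T t /\ Prog i t).
  { intros T. apply NNPP. intros Hc. apply Hno. exists T. intros t Ht Hpr. apply Hc. eauto. }
  assert (AD : forall j, exists s, Done i j s).
  { apply all_done.
    - destruct (HT 𝟘) as [t [_ [m [_ [Hd _]]]]]. exists (t ⊕ 𝟙). apply (done_mono_m i m 𝟘 (t ⊕ 𝟙)); auto. apply le_0.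
    - intros j s Hd. destruct (HT s) as [t [Hst [m [Hm [Hd1 Hd2]]]]].
      destruct (classic (le m j)) as [Hmj|Hmj].
      + exfalso. apply Hd2. apply (done_mono_s i m s t); auto. apply (done_mono_m i j m s); auto.
      + apply not_le in Hmj. apply lt_le_S in Hmj. exists (t ⊕ 𝟙). apply (done_mono_m i m (j ⊕ 𝟙) (t ⊕ 𝟙)); auto. }
  destruct (AD b0) as [s [_ Hall]]. destruct (Hall b0 (lt_S b0)) as [y [_ Hy]]. apply Hy, H.
Qed.


Lemma Csem_pair : forall a x y, Csem a (pair M x y) <-> ((First x a /\ Snd x y) \/ (~ First x a /\ y = a ⊕ 𝟙)).
Proof.
  intros a x y. split.
  - intros [x1 [y1 [_ [_ [He H]]]]]. apply pair_inj in He. destruct He as [<- <-]. auto.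
  - intros H. exists x, y. split. apply pair_le_l. split. apply pair_le_r. split; auto.
Qed.

Lemma first_snd : forall a x y, First x a -> Snd x y -> y ≺ a ⊕ 𝟙 /\ exists t, x = pair M t y /\ Prog y t.
Proof.
  intros a x y [t [i [_ [_ [Hx [Hi Hp']]]]]] [t' [i' [_ [_ [Hx' ->]]]]].
  rewrite Hx in Hx'. apply pair_inj in Hx'. destruct Hx' as [<- <-]. split; auto. eauto.
Qed.

Lemma ind2_of_spp : SPP M ->
  sat M (scons 𝟘 rho) sig (fEx (fAll p)) ->
  (forall a, sat M (scons a rho) sig (fEx (fAll p)) -> sat M (scons (a ⊕ 𝟙) rho) sig (fEx (fAll p))) ->
  forall a, sat M (scons a rho) sig (fEx (fAll p)).
Proof.
  intros HS. change (forall n, sat M (scons n rho) sig (fEx (fAll p))) with (forall n, exists b, forall x, P n b x).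
  change (sat M (scons 𝟘 rho) sig (fEx (fAll p))) with (exists b, forall x, P 𝟘 b x).
  change (forall a, (exists b, forall x, sat M (scons x (scons b (scons a rho))) sig p) ->
     (exists b, forall x, sat M (scons x (scons b (scons (a ⊕ 𝟙) rho))) sig p))
   with (forall n, (exists b, forall x, P n b x) -> (exists b, forall x, P (n ⊕ 𝟙) b x)).
  intros H0 HSt a. apply NNPP. intros Ha.
  destruct (CA0 Cform s00_Cform (scons a rho) sig Hsig) as [C [HCs HC]].
  setoid_rewrite sat_Cform in HC.
  assert (HCp : forall x y, C (pair M x y) <-> ((First x a /\ Snd x y) \/ (~ First x a /\ y = a ⊕ 𝟙))).
  { intros; rewrite HC; apply Csem_pair. }
  assert (HF : IsFunTo M (a ⊕ 𝟙 ⊕ 𝟙) C).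
  { split; [|split].
    - intros n Hn. apply HC in Hn. destruct Hn as [x [y [_ [_ [Hn H]]]]]. exists x, y. split; auto.
      destruct H as [[H1 H2]|[H1 ->]].
      + eapply lt_trans; [apply (first_snd a x y H1 H2)| apply lt_S].
      + apply lt_S.
    - intros x. destruct (classic (First x a)) as [H|H].
      + destruct H as [t [i [Ht [Hi [Hx [Hia Hpr]]]]]]. exists i. apply HCp. left. split.
        * exists t, i. auto.
        * exists t, i. auto.
      + exists (a ⊕ 𝟙). apply HCp. right. auto.
    - intros x y y' H1 H2. apply HCp in H1, H2.
      destruct H1 as [[H1 H1']|[H1 H1']]; destruct H2 as [[H2 H2']|[H2 H2']]; try tauto.
      + destruct H1' as [t [i [_ [_ [Hx ->]]]]]. destruct H2' as [t' [i' [_ [_ [Hx' ->]]]]].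
        rewrite Hx in Hx'. apply pair_inj in Hx'. tauto.
      + congruence. }
  destruct (HS (a ⊕ 𝟙 ⊕ 𝟙) C HCs HF) as [I [HIs HI]].
  assert (Claim : forall i, i ≺ a ⊕ 𝟙 -> ((forall m, exists x, m ≺ x /\ C (pair M x i)) <-> ~ exists b, forall x, P i b x)).
  { intros i Hi. split.
    - intros Hinf [b0 Hb0]. destruct (fin_of_phi i b0 Hb0) as [T HT].
      destruct (Hinf (pair M T i)) as [x [Hx Hc]]. apply HCp in Hc.
      destruct Hc as [[H1 H2]|[H1 H2]].
      + destruct (first_snd a x i H1 H2) as [_ [t [-> Hpr]]].
        destruct (classic (le T t)) as [HTt|HTt].
        * apply (HT t HTt Hpr).
        * apply not_le in HTt. apply (lt_irrefl (pair M t i)). eapply lt_trans; eauto. apply pair_mono_l; auto.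
      + subst i. apply (lt_irrefl _ Hi).
    - intros Hn m. assert (Hn' : forall b, exists x, ~ P i b x).
      { intros b. apply NNPP. intros Hc. apply Hn. exists b. intros x. apply NNPP. intros Hx. apply Hc. eauto. }
      destruct (inf_of_not_phi i Hn' m) as [t [Hmt Hpr]]. exists (pair M t i). split.
      + eapply lt_le_trans; eauto. apply pair_le_l.
      + apply HCp. left. split.
        * exists t, i. repeat split; auto. apply pair_le_l. apply pair_le_r.
        * exists t, i. repeat split; auto. apply pair_le_l. apply pair_le_r. }
  assert (Hse : set_env M (scons I sig)) by (intros [|j]; simpl; auto).
  pose proof (ind0g (fImp (fLt (tvar 0) (tadd (tvar 1) tone)) (fNeg (fMem (tvar 0) 0))) ltac:(simpl; tauto)
     (scons a rho0) (scons I sig) Hse) as G.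
  simpl in G.
  assert (Fin : a ≺ a ⊕ 𝟙 -> ~ I a).
  { apply G.
    - intros _ HI0. apply HI in HI0. destruct HI0 as [_ Hinf].
      apply (Claim 𝟘 (lt_0_S a)) in Hinf. auto.
    - intros n IH Hn HIn. apply HI in HIn. destruct HIn as [_ Hinf].
      assert (Hn0 : n ≺ a ⊕ 𝟙) by (eapply lt_trans; [apply lt_S| auto]).
      apply (Claim _ Hn) in Hinf. apply Hinf. apply HSt.
      apply NNPP. intros Hc. apply IH; auto. apply HI. split.
      + eapply lt_trans; eauto. apply lt_S.
      + apply (Claim n Hn0). auto. }
  apply (Fin (lt_S a)). apply HI. split.
  - eapply lt_trans; apply lt_S.
  - apply (Claim a (lt_S a)). auto.
Qed.

End TwoOne.

End Arith.

Theorem mainTheorem3 :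
  forall M : L2str, RCA0 M -> (ISigma02 M <-> SPP M).
Proof.
  intros M HM. split.
  - intros HI2 k C HCs HF. exact (spp_of_i2 M HM (fun _ => C) (fun _ => HCs) HI2 k).
  - intros HS phi Hphi rho sigma Hs H0 HSt.
    destruct phi; simpl in Hphi; try contradiction.
    destruct phi; simpl in Hphi; try contradiction.
    exact (ind2_of_spp M HM sigma Hs phi Hphi rho HS H0 HSt).
Qed.
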